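(* Let $\mathfrak g=(\mathfrak g_1\xrightarrow{d}\mathfrak g_0)$ be a Lie algebra in the Loday–Pirashvili category $\mathcal{LM}$, with bracket $[\cdot,\cdot]$ (the Lie bracket on $\mathfrak g_0$ and the right action $\mathfrak g_1\otimes\mathfrak g_0\to\mathfrak g_1$). Consider the free graded Lie algebra on $\mathfrak g_0+\mathfrak g_1$ ($\mathfrak g_i$ in degree $i$), with bracket $\llbracket\cdot,\cdot\rrbracket$ and the differential induced by $d$, and let $E\mathfrak g$ be its quotient by the relations $\llbracket x,y\rrbracket=[x,y]$ for $x,y\in\mathfrak g_0$ and for $x\in\mathfrak g_1$, $y\in\mathfrak g_0$. Then $E\mathfrak g$ is a differential graded Lie algebra, and its truncation modulo terms of degree $\ge 2$, i.e. the map $(E\mathfrak g)_1\xrightarrow{d}(E\mathfrak g)_0$ with the restricted brackets $(E\mathfrak g)_0\otimes(E\mathfrak g)_0\to(E\mathfrak g)_0$ and $(E\mathfrak g)_1\otimes(E\mathfrak g)_0\to(E\mathfrak g)_1$, coincides with $\mathfrak g$ as a Lie algebra in $\mathcal{LM}$.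
   Context: Fix a field $\mathbf k$ of characteristic zero. The Loday–Pirashvili category $\mathcal{LM}$ has objects linear maps $U\xrightarrow{f}V$ of $\mathbf k$-vector spaces and morphisms commutative squares. A Lie algebra in $\mathcal{LM}$ is a map $M\xrightarrow{f}\mathfrak g$ where $\mathfrak g$ is a Lie algebra, $M$ is a right $\mathfrak g$-module, and $f$ is a morphism of right $\mathfrak g$-modules ($\mathfrak g$ acting on itself by the right adjoint action). *)

(* Defs.v *)
From HB Require Import structures.
From mathcomp Require Import all_boot all_algebra.
Set Implicit Arguments. Unset Strict Implicit. Unset Printing Implicit Defensive.
Import GRing.Theory.
Local Open Scope ring_scope.

(* A Lie algebra in LM: M --f--> g, g a Lie algebra (bracket br), M a right
   g-module (action act), f a morphism of right g-modules. *)
Definition LM_lie_algebra (k : fieldType) (g0 g1 : lmodType k)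
  (br : g0 -> g0 -> g0) (act : g1 -> g0 -> g1) (d : g1 -> g0) : Prop :=
  (
      (forall (a : k) x y z, br (a *: x + y) z = a *: br x z + br y z) /\
      (forall (a : k) x y z, br x (a *: y + z) = a *: br x y + br x z) /\
      (forall x, br x x = 0) /\
      (forall x y z, br x (br y z) + br y (br z x) + br z (br x y) = 0) /\
      (forall (a : k) m n x, act (a *: m + n) x = a *: act m x + act n x) /\
      (forall (a : k) m x y, act m (a *: x + y) = a *: act m x + act m y) /\
      (forall m x y, act m (br x y) = act (act m x) y - act (act m y) x) /\
      (forall (a : k) m n, d (a *: m + n) = a *: d m + d n) /\
      (forall m x, d (act m x) = br (d m) x)).

Inductive term (K V0 V1 : Type) : Type :=
| T0 of V0
| T1 of V1
| Tzero of nat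
| Tadd of term K V0 V1 & term K V0 V1
| Tscale of K & term K V0 V1
| Tbr of term K V0 V1 & term K V0 V1.

Arguments T0 {K V0 V1}.
Arguments T1 {K V0 V1}.
Arguments Tzero {K V0 V1}.
Arguments Tadd {K V0 V1}.
Arguments Tscale {K V0 V1}.
Arguments Tbr {K V0 V1}.

Fixpoint tdeg K V0 V1 (t : term K V0 V1) : nat :=
  match t with
  | T0 _ => 0 | T1 _ => 1 | Tzero n => n
  | Tadd a _ => tdeg a | Tscale _ a => tdeg a
  | Tbr a b => tdeg a + tdeg b
  end.

(* well-formed = homogeneous (sums only of terms of equal degree) *)
Fixpoint wf K V0 V1 (t : term K V0 V1) : bool :=
  match t with
  | T0 _ | T1 _ | Tzero _ => true
  | Tadd a b => [&& wf a, wf b & tdeg a == tdeg b]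
  | Tscale _ a => wf a
  | Tbr a b => wf a && wf b
  end.

(* The congruence defining E g: quotient of the free graded Lie algebra on
   g0 + g1 (i.e. the free graded nonassociative algebra on the graded vector
   space g0 + g1, modulo graded antisymmetry and graded Jacobi) by the ideal
   generated by [[x,y]] = [x,y] (x,y in g0) and [[m,x]] = m.x (m in g1, x in g0).
   (E g)_n = well-formed terms of degree n modulo Econg. *)
Inductive Econg (k : fieldType) (g0 g1 : lmodType k)
  (br : g0 -> g0 -> g0) (act : g1 -> g0 -> g1) :
  term k g0 g1 -> term k g0 g1 -> Prop :=
| Ec_refl t : Econg br act t t
| Ec_sym a b : Econg br act a b -> Econg br act b a
| Ec_trans a b c : Econg br act a b -> Econg br act b c -> Econg br act a c
| Ec_add a a' b b' : Econg br act a a' -> Econg br act b b' ->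
    Econg br act (Tadd a b) (Tadd a' b')
| Ec_scale c a a' : Econg br act a a' -> Econg br act (Tscale c a) (Tscale c a')
| Ec_br a a' b b' : Econg br act a a' -> Econg br act b b' ->
    Econg br act (Tbr a b) (Tbr a' b')
| Ec_addA a b c : wf a -> wf b -> wf c -> tdeg a = tdeg b -> tdeg b = tdeg c ->
    Econg br act (Tadd a (Tadd b c)) (Tadd (Tadd a b) c)
| Ec_addC a b : wf a -> wf b -> tdeg a = tdeg b ->
    Econg br act (Tadd a b) (Tadd b a)
| Ec_add0 a : wf a -> Econg br act (Tadd a (Tzero (tdeg a))) a
| Ec_addN a : wf a -> Econg br act (Tadd a (Tscale (-1) a)) (Tzero (tdeg a))
| Ec_scale1 a : wf a -> Econg br act (Tscale 1 a) a
| Ec_scaleA c c' a : wf a ->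
    Econg br act (Tscale c (Tscale c' a)) (Tscale (c * c') a)
| Ec_scaleDr c a b : wf a -> wf b -> tdeg a = tdeg b ->
    Econg br act (Tscale c (Tadd a b)) (Tadd (Tscale c a) (Tscale c b))
| Ec_scaleDl c c' a : wf a ->
    Econg br act (Tscale (c + c') a) (Tadd (Tscale c a) (Tscale c' a))
| Ec_T0add x y : Econg br act (T0 (x + y)) (Tadd (T0 x) (T0 y))
| Ec_T0scale c x : Econg br act (T0 (c *: x)) (Tscale c (T0 x))
| Ec_T1add m n : Econg br act (T1 (m + n)) (Tadd (T1 m) (T1 n))
| Ec_T1scale c m : Econg br act (T1 (c *: m)) (Tscale c (T1 m))
| Ec_brDl a a' b : wf a -> wf a' -> wf b -> tdeg a = tdeg a' ->
    Econg br act (Tbr (Tadd a a') b) (Tadd (Tbr a b) (Tbr a' b))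
| Ec_brDr a b b' : wf a -> wf b -> wf b' -> tdeg b = tdeg b' ->
    Econg br act (Tbr a (Tadd b b')) (Tadd (Tbr a b) (Tbr a b'))
| Ec_brZl c a b : wf a -> wf b ->
    Econg br act (Tbr (Tscale c a) b) (Tscale c (Tbr a b))
| Ec_brZr c a b : wf a -> wf b ->
    Econg br act (Tbr a (Tscale c b)) (Tscale c (Tbr a b))
| Ec_anti a b : wf a -> wf b ->
    Econg br act (Tbr a b)
      (Tscale (- (-1) ^+ (tdeg a * tdeg b)) (Tbr b a))
| Ec_jacobi a b c : wf a -> wf b -> wf c ->
    Econg br act (Tbr a (Tbr b c))
      (Tadd (Tbr (Tbr a b) c)
            (Tscale ((-1) ^+ (tdeg a * tdeg b)) (Tbr b (Tbr a c))))
| Ec_rel00 x y : Econg br act (Tbr (T0 x) (T0 y)) (T0 (br x y))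
| Ec_rel10 m x : Econg br act (Tbr (T1 m) (T0 x)) (T1 (act m x)).

(* The differential induced by d: degree -1 derivation,
   d[[a,b]] = [[da,b]] + (-1)^|a| [[a,db]], d = 0 on degree 0. Meant to be
   applied to well-formed terms of degree >= 1 (terms of degree 0 are sent
   to 0 in degree -1, which is not represented). *)
Fixpoint dT (k : pzRingType) V0 V1 (d : V1 -> V0) (t : term k V0 V1)
  : term k V0 V1 :=
  match t with
  | T0 _ => Tzero 0
  | T1 m => T0 (d m)
  | Tzero n => Tzero n.-1
  | Tadd a b => Tadd (dT d a) (dT d b)
  | Tscale c a => Tscale c (dT d a)
  | Tbr a b =>
      if tdeg a == 0%N then Tbr a (dT d b)
      else if tdeg b == 0%N then Tbr (dT d a) b
      else Tadd (Tbr (dT d a) b) (Tscale ((-1) ^+ tdeg a) (Tbr a (dT d b)))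
  end.

(* Main.v *)
Require Import Defs.
From HB Require Import structures.
From mathcomp Require Import all_boot all_algebra.
Import GRing.Theory.
Local Open Scope ring_scope.
From mathcomp Require Import ring zify.
Set Implicit Arguments. Unset Strict Implicit. Unset Printing Implicit Defensive.

Inductive lx (K : Type) := LA of nat | LZ of nat | LP of lx K & lx K
  | LS of K & lx K | LB of lx K & lx K.
Arguments LA {K}. Arguments LZ {K}.

Inductive mono := MA of nat | MB of mono & mono.

Fixpoint mono_eqb (a b : mono) : bool :=
  match a, b with
  | MA i, MA j => eqn i j
  | MB a1 a2, MB b1 b2 => mono_eqb a1 b1 && mono_eqb a2 b2
  | _, _ => false
  end.

Lemma mono_eqbP : Equality.axiom mono_eqb.
Proof.
elim=> [i|a1 IH1 a2 IH2] [j|b1 b2] /=; try by constructor.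
- by apply: (iffP eqnP) => [->|[]].
- case: IH1 => [->|n]; last by constructor; case.
  case: IH2 => [->|n]; last by constructor; case.
  by constructor.
Qed.
HB.instance Definition _ := hasDecEq.Build mono mono_eqbP.

Lemma mono_eqbE a b : mono_eqb a b = (a == b).
Proof. by []. Qed.

Section Basic.
Variables (k : fieldType) (g0 g1 : lmodType k)
  (br : g0 -> g0 -> g0) (act : g1 -> g0 -> g1).
Local Notation T := (term k g0 g1).
Local Notation E := (Econg br act).

Lemma Esym a b : E a b -> E b a. Proof. exact: Ec_sym. Qed.
Lemma Etr a b c : E a b -> E b c -> E a c. Proof. exact: Ec_trans. Qed.
Lemma Erefl a : E a a. Proof. exact: Ec_refl. Qed.

Lemma Epres a b : E a b -> tdeg a = tdeg b /\ wf a = wf b.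
Proof.
elim; clear; intros; simpl in *;
  repeat match goal with H : _ /\ _ |- _ => destruct H end;
  repeat match goal with H : is_true (wf ?x) |- _ => rewrite H; clear H end;
  repeat match goal with H : tdeg ?x = _ |- _ => rewrite H; clear H end;
  rewrite ?eqxx /=; try (split; congruence).
all: split; rewrite ?andbb //; try lia; apply/esym/eqP; lia.

Qed.

Lemma Ewf a b : E a b -> wf a -> wf b.
Proof. by case/Epres=> _ ->. Qed.
Lemma Edeg a b : E a b -> tdeg a = tdeg b.
Proof. by case/Epres. Qed.

Lemma add0l x : wf x -> E (Tadd (Tzero (tdeg x)) x) x.
Proof.
move=> wx; apply: Etr (Ec_add0 _ _ wx); apply: Ec_addC => //.
Qed.

Lemma scale0 x : wf x -> E (Tscale 0 x) (Tzero (tdeg x)).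
Proof.
move=> wx; set s := Tscale 0 x.
have ws : wf s by [].
have ss : E s (Tadd s s).
  by have := Ec_scaleDl br act 0 0 wx; rewrite addr0.
have -> : tdeg x = tdeg s by [].
apply: Etr (Ec_addN _ _ ws).
apply: Etr (Ec_sym (Ec_add0 _ _ ws)) _.
apply: Etr (Ec_add (Erefl s) (Ec_sym (Ec_addN _ _ ws))) _.
apply: Etr (Ec_addA _ _ ws ws _ _ _) _ => //.
apply: Ec_add (Erefl _); exact: Esym.
Qed.

Lemma scaleZ c n : E (Tscale c (Tzero n)) (Tzero n : T).
Proof.
have w : wf (Tzero n : T) by [].
apply: Etr (Ec_scale c (Esym (scale0 w))) _.
apply: Etr (Ec_scaleA _ _ _ _ _) _ => //.
rewrite mulr0; exact: scale0.
Qed.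

Lemma Ecancel x y z : wf x -> wf y -> wf z -> tdeg x = tdeg z -> tdeg y = tdeg z ->
  E (Tadd x z) (Tadd y z) -> E x y.
Proof.
move=> wx wy wz dx dy h.
have wn : wf (Tscale (-1) z) by [].
have e1 : forall u, wf u -> tdeg u = tdeg z ->
   E u (Tadd (Tadd u z) (Tscale (-1) z)).
  move=> u wu du.
  apply: Etr (Esym (Ec_add0 _ _ wu)) _.
  rewrite du; apply: Etr (Ec_add (Erefl u) (Esym (Ec_addN _ _ wz))) _.
  by apply: Ec_addA.
apply: Etr (e1 _ wx dx) _; apply: Etr _ (Esym (e1 _ wy dy)).
exact: Ec_add h (Erefl _).
Qed.

Lemma V1 x y z w : wf x -> wf y -> wf z -> wf w ->
  tdeg x = tdeg y -> tdeg y = tdeg z -> tdeg z = tdeg w ->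
  E (Tadd (Tadd x y) (Tadd z w)) (Tadd (Tadd x z) (Tadd y w)).
Proof.
move=> wx wy wz ww dxy dyz dzw.
have wzw : wf (Tadd z w) by rewrite /= wz ww dzw eqxx.
have wyw : wf (Tadd y w) by rewrite /= wy ww -dzw dyz eqxx.
apply: Etr (Esym (Ec_addA _ _ wx wy wzw dxy dyz)) _.
apply: Etr _ (Ec_addA _ _ wx wz wyw (etrans dxy dyz) (esym dyz)).
apply: Ec_add (Erefl _) _.
apply: Etr (Ec_addA _ _ wy wz ww dyz dzw) _.
apply: Etr _ (Esym (Ec_addA _ _ wz wy ww (esym dyz) (etrans dyz dzw))).
apply: Ec_add _ (Erefl _); exact: Ec_addC.
Qed.

Lemma BZr a n : wf a -> E (Tbr a (Tzero n)) (Tzero (tdeg a + n)).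
Proof.
move=> wa; have w : wf (Tzero n : T) by [].
apply: Etr (Ec_br (Erefl a) (Esym (scale0 w))) _.
apply: Etr (Ec_brZr _ _ _ wa w) _.
have -> : (tdeg a + n)%N = tdeg (Tbr a (Tzero n) : T) by [].
by apply: scale0; rewrite /= wa.
Qed.

Lemma BZl a n : wf a -> E (Tbr (Tzero n) a) (Tzero (n + tdeg a)).
Proof.
move=> wa; have w : wf (Tzero n : T) by [].
apply: Etr (Ec_br (Esym (scale0 w)) (Erefl a)) _.
apply: Etr (Ec_brZl _ _ _ w wa) _.
have -> : (n + tdeg a)%N = tdeg (Tbr (Tzero n) a : T) by [].
by apply: scale0; rewrite /= wa.
Qed.

Lemma rel_sub L R u v (l : k) : E u v -> wf L -> wf R -> wf u ->
  tdeg L = tdeg u -> tdeg R = tdeg u ->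
  E (Tadd L (Tscale l v)) (Tadd R (Tscale l u)) -> E L R.
Proof.
move=> huv wL wR wu dL dR h.
have wv : wf v by apply: Ewf huv wu.
have dv : tdeg v = tdeg u by rewrite (Edeg huv).
apply: (@Ecancel _ _ (Tscale l v)) => //=; rewrite ?dv //.
apply: Etr h _; apply: Ec_add (Erefl _) _; exact: Ec_scale.
Qed.

Section Norm.
Variable env : seq T.

Definition atom i := nth (Tzero 0) env i.

Fixpoint interp (e : lx k) : T :=
  match e with
  | LA i => atom i
  | LZ n => Tzero n
  | LP a b => Tadd (interp a) (interp b)
  | LS c a => Tscale c (interp a)
  | LB a b => Tbr (interp a) (interp b)
  end.

Fixpoint mi (m : mono) : T :=
  match m with MA i => atom i | MB a b => Tbr (mi a) (mi b) end.

Fixpoint psum n (l : seq (k * mono)) : T :=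
  match l with
  | [::] => Tzero n
  | cm :: l' => Tadd (Tscale cm.1 (mi cm.2)) (psum n l')
  end.

Fixpoint bmul (l1 l2 : seq (k * mono)) : seq (k * mono) :=
  match l1 with
  | [::] => [::]
  | cm :: l1' => [seq (cm.1 * dm.1, MB cm.2 dm.2) | dm <- l2] ++ bmul l1' l2
  end.

Fixpoint expand (e : lx k) : seq (k * mono) :=
  match e with
  | LA i => [:: (1, MA i)]
  | LZ _ => [::]
  | LP a b => expand a ++ expand b
  | LS c a => [seq (c * cm.1, cm.2) | cm <- expand a]
  | LB a b => bmul (expand a) (expand b)
  end.

Fixpoint coef (l : seq (k * mono)) (m : mono) : k :=
  match l with
  | [::] => 0
  | cm :: l' => if mono_eqb cm.2 m then cm.1 + coef l' m else coef l' m
  end.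

Fixpoint coef_eqs (M : seq mono) (l1 l2 : seq (k * mono)) : Prop :=
  match M with
  | [::] => True
  | m :: M' => coef l1 m = coef l2 m /\ coef_eqs M' l1 l2
  end.

Definition monos e := [seq cm.2 | cm <- expand e].

Definition goodm n (m : mono) := wf (mi m) && (tdeg (mi m) == n).
Definition good n (l : seq (k * mono)) := all (fun cm => goodm n cm.2) l.

Lemma wf_psum n l : good n l -> wf (psum n l) && (tdeg (psum n l) == n).
Proof.
elim: l => [|[c m] l IH] //= /andP[/andP[wm /eqP dm] /IH /andP[-> /eqP ->]].
by rewrite wm dm eqxx.
Qed.

Lemma good_cat n l1 l2 : good n (l1 ++ l2) = good n l1 && good n l2.
Proof. exact: all_cat. Qed.

Lemma psum_cat n l1 l2 : good n l1 -> good n l2 ->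
  E (psum n (l1 ++ l2)) (Tadd (psum n l1) (psum n l2)).
Proof.
move=> + g2; have /andP[w2 /eqP d2] := wf_psum g2.
elim: l1 => [|[c m] l IH] /=.
  by move=> _; apply: Esym; rewrite -{1}d2; apply: add0l.
case/andP=> /andP[wm /eqP dm] gl.
have /andP[wl /eqP dl] := wf_psum gl.
apply: Etr (Ec_add (Erefl _) (IH gl)) _.
by apply: Ec_addA => //=; rewrite ?dm ?dl.
Qed.

Lemma good_scale n c l : good n l -> good n [seq (c * cm.1, cm.2) | cm <- l].
Proof. by elim: l => [|[c' m] l IH] //= /andP[-> /IH]. Qed.

Lemma psum_scale n c l : good n l ->
  E (psum n [seq (c * cm.1, cm.2) | cm <- l]) (Tscale c (psum n l)).
Proof.
elim: l => [|[c' m] l IH] /=; first by move=> _; apply: Esym; apply: scaleZ.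
case/andP=> /andP[wm /eqP dm] gl.
have /andP[wl /eqP dl] := wf_psum gl.
apply: Etr (Ec_add (Esym (Ec_scaleA _ _ _ _ wm)) (IH gl)) _.
by apply: Esym; apply: Ec_scaleDr => //=; rewrite ?dm ?dl.
Qed.

Lemma good_br_r p q m l : goodm p m -> good q l ->
  good (p + q) [seq (dm.1, MB m dm.2) | dm <- l].
Proof.
move=> /andP[wm /eqP dm].
elim: l => [|[c m'] l IH] //= /andP[/andP[wm' /eqP dm'] /IH ->].
by rewrite /goodm /= wm wm' dm dm' eqxx.
Qed.

Lemma psum_br_r p q m l : goodm p m -> good q l ->
  E (Tbr (mi m) (psum q l)) (psum (p + q) [seq (dm.1, MB m dm.2) | dm <- l]).
Proof.
move=> gm; have /andP[wm /eqP dm] := gm.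
elim: l => [|[c m'] l IH] /=; first by move=> _; rewrite -dm; apply: BZr.
case/andP=> /andP[wm' /eqP dm'] gl.
have /andP[wl /eqP dl] := wf_psum gl.
apply: Etr (Ec_brDr _ _ _ _ _ _) _ => //=; rewrite ?dm' ?dl //.
apply: Ec_add (IH gl).
exact: Ec_brZr.
Qed.

Lemma good_bmul p q l1 l2 : good p l1 -> good q l2 -> good (p + q) (bmul l1 l2).
Proof.
move=> + g2; elim: l1 => [|[c m] l IH] //= /andP[gm /IH gl].
rewrite good_cat gl andbT.
have := good_br_r gm g2; have := good_scale c (good_br_r gm g2).
by rewrite -map_comp.
Qed.

Lemma psum_br p q l1 l2 : good p l1 -> good q l2 ->
  E (Tbr (psum p l1) (psum q l2)) (psum (p + q) (bmul l1 l2)).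
Proof.
move=> + g2; have /andP[w2 /eqP d2] := wf_psum g2.
elim: l1 => [|[c m] l IH] /=; first by move=> _; rewrite -{2}d2; apply: BZl.
case/andP=> gm gl; have /andP[wm /eqP dm] := gm.
have /andP[wl /eqP dl] := wf_psum gl.
apply: Etr (Ec_brDl _ _ _ _ _ _) _ => //=; rewrite ?dm ?dl //.
have gb := good_br_r gm g2.
have -> : [seq (c * dm0.1, MB m dm0.2) | dm0 <- l2] =
          [seq (c * cm.1, cm.2) | cm <- [seq (dm.1, MB m dm.2) | dm <- l2]].
  by rewrite -map_comp.
apply: Etr _ (Esym (psum_cat (good_scale c gb) (good_bmul gl g2))).
apply: Ec_add (IH gl).
apply: Etr (Ec_brZl _ _ _ wm w2) _.
apply: Esym; apply: Etr (psum_scale c gb) _.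
apply: Ec_scale; apply: Esym; exact: psum_br_r.
Qed.



Lemma expand_sound e : wf (interp e) ->
  good (tdeg (interp e)) (expand e) /\
  E (interp e) (psum (tdeg (interp e)) (expand e)).
Proof.
elim: e => [i|n|a IHa b IHb|c a IHa|a IHa b IHb] /=.
- move=> wi; split; first by rewrite /= /goodm /= wi eqxx.
  apply: Etr (Esym (Ec_scale1 _ _ wi)) _.
  by apply: Esym; apply: Ec_add0.
- by split=> //; apply: Erefl.
- case/and3P=> wa wb /eqP dab.
  case: (IHa wa) => ga ea; case: (IHb wb) => gb eb.
  rewrite -dab in gb eb.
  split; first by rewrite good_cat ga gb.
  apply: Etr (Ec_add ea eb) _; apply: Esym; exact: psum_cat.
- move=> wa; case: (IHa wa) => ga ea; split; first exact: good_scale.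
  apply: Etr (Ec_scale c ea) _; apply: Esym; exact: psum_scale.
- case/andP=> wa wb.
  case: (IHa wa) => ga ea; case: (IHb wb) => gb eb.
  split; first exact: good_bmul.
  apply: Etr (Ec_br ea eb) _; exact: psum_br.
Qed.

Definition goodM n (M : seq mono) := all (goodm n) M.

Lemma psum_zero n M : goodM n M -> E (psum n [seq (0, m) | m <- M]) (Tzero n).
Proof.
elim: M => [|m M IH] /=; first by move=> _; apply: Erefl.
case/andP=> gm gM; have /andP[wm /eqP dm] := gm.
apply: Etr (Ec_add (scale0 wm) (IH gM)) _.
by rewrite dm; apply: Ec_add0.
Qed.

Lemma psum_add n M (f g : mono -> k) : goodM n M ->
  E (psum n [seq (f m + g m, m) | m <- M])
    (Tadd (psum n [seq (f m, m) | m <- M]) (psum n [seq (g m, m) | m <- M])).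
Proof.
elim: M => [|m M IH] /=.
  by move=> _; apply: Esym; exact: (Ec_add0 br act (a:=Tzero n)).
case/andP=> gm gM; have /andP[wm /eqP dm] := gm.
have gf : forall h : mono -> k, good n [seq (h m0, m0) | m0 <- M].
  by move=> h; elim: (M) gM => //= m1 M1 IH1 /andP[-> /IH1].
have /andP[wF /eqP dF] := wf_psum (gf f).
have /andP[wG /eqP dG] := wf_psum (gf g).
apply: Etr (Ec_add (Ec_scaleDl _ _ _ _ wm) (IH gM)) _.
apply: V1 => //=; rewrite ?dF ?dG ?dm //; by rewrite wm ?wF ?wG ?dm ?dF ?dG eqxx.
Qed.

Lemma psum_delta n M m0 c : goodM n M -> uniq M -> m0 \in M ->
  E (psum n [seq ((if m == m0 then c else 0), m) | m <- M]) (Tscale c (mi m0)).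
Proof.
elim: M => [|m M IH] //=.
case/andP=> gm gM; have /andP[wm /eqP dm] := gm.
case/andP=> mM uM; rewrite in_cons.
case: eqP => [e _|ne /= m0M]; first subst m0.
- have -> : [seq ((if m1 == m then c else 0), m1) | m1 <- M] = [seq (0, m1) | m1 <- M].
    apply/eq_in_map => m1 m1M; case: eqP => // e; by move: mM; rewrite -e m1M.
  apply: Etr (Ec_add (Erefl _) (psum_zero gM)) _.
  by rewrite eqxx -dm; apply: (Ec_add0 br act (a:=Tscale c (mi m))).
- have -> : (m == m0) = false by apply/eqP => e; apply: ne; rewrite e.
  apply: Etr (Ec_add (scale0 wm) (IH gM uM m0M)) _.
  have /andP[w0 /eqP d0] : goodm n m0 by move/allP: gM; apply.
  by rewrite dm -d0; apply: (add0l (x:=Tscale c (mi m0))).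
Qed.

Lemma coef_cons c m0 l m :
  coef ((c, m0) :: l) m = (if m == m0 then c else 0) + coef l m.
Proof. by rewrite /= mono_eqbE eq_sym; case: eqP; rewrite ?add0r. Qed.

Lemma group n l M : good n l -> goodM n M -> uniq M ->
  {subset [seq cm.2 | cm <- l] <= M} ->
  E (psum n l) (psum n [seq (coef l m, m) | m <- M]).
Proof.
move=> + gM uM; elim: l => [|[c m0] l IH] /=.
  by move=> _ _; apply: Esym; apply: psum_zero.
case/andP=> gm0 gl sub.
have m0M : m0 \in M by apply: sub; rewrite in_cons eqxx.
have subl : {subset [seq cm.2 | cm <- l] <= M}.
  by move=> x xl; apply: sub; rewrite in_cons xl orbT.
apply: Etr (Ec_add (Esym (psum_delta c gM uM m0M)) (IH gl subl)) _.
apply: Etr (Esym (psum_add _ _ gM)) _.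
by under eq_map => m do rewrite -coef_cons; apply: Erefl.
Qed.

Lemma coef_eqs_in M l1 l2 : coef_eqs M l1 l2 -> forall m, m \in M -> coef l1 m = coef l2 m.
Proof.
elim: M => [|m M IH] //= [h1 h2] x; rewrite in_cons; case: eqP => [-> _|_ /=].
  exact: h1.
exact: IH.
Qed.

Lemma good_in n l m : good n l -> m \in [seq cm.2 | cm <- l] -> goodm n m.
Proof.
elim: l => [|[c m1] l IH] //= /andP[gq gl]; rewrite in_cons.
by case: eqP => [->|_ /= /(IH gl)].
Qed.

Lemma lin_thm e1 e2 L R : interp e1 = L -> interp e2 = R -> wf L -> wf R ->
  tdeg L = tdeg R -> coef_eqs (monos e1 ++ monos e2) (expand e1) (expand e2) ->
  E L R.
Proof.
move=> <- <- w1 w2 d12 ce.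
case: (expand_sound w1) => gg1 s1; case: (expand_sound w2) => gg2 s2.
rewrite -d12 in gg2 s2.
set n := tdeg (interp e1) in gg1 s1 gg2 s2.
set M := undup (monos e1 ++ monos e2).
have uM : uniq M by apply: undup_uniq.
have gM : goodM n M.
  apply/allP => m; rewrite mem_undup mem_cat; case/orP => h.
    exact: good_in gg1 h.
  exact: good_in gg2 h.
have sub1 : {subset [seq cm.2 | cm <- expand e1] <= M}.
  by move=> m h; rewrite mem_undup mem_cat h.
have sub2 : {subset [seq cm.2 | cm <- expand e2] <= M}.
  by move=> m h; rewrite mem_undup mem_cat h orbT.
apply: Etr s1 _; apply: Etr _ (Esym s2).
apply: Etr (group gg1 gM uM sub1) _.
apply: Etr _ (Esym (group gg2 gM uM sub2)).
have -> : [seq (coef (expand e1) m, m) | m <- M] = [seq (coef (expand e2) m, m) | m <- M].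
  apply/eq_in_map => m; rewrite mem_undup => h.
  by rewrite (coef_eqs_in ce h).
exact: Erefl.
Qed.

End Norm.

End Basic.


Ltac inlist x l := lazymatch l with
  | cons x _ => constr:(0%nat)
  | cons _ ?l' => let n := inlist x l' in constr:(S n) end.
Ltac collect t acc := lazymatch t with
 | Tadd ?a ?b => let acc := collect a acc in collect b acc
 | Tscale _ ?a => collect a acc
 | Tbr ?a ?b => let acc := collect a acc in collect b acc
 | Tzero _ => acc
 | _ => match constr:(tt) with
        | _ => let _ := inlist t acc in acc
        | _ => constr:(cons t acc)
        end
 end.
Ltac reify K t l := lazymatch t with
 | Tadd ?a ?b => let ra := reify K a l in let rb := reify K b l in constr:(LP ra rb)
 | Tscale ?c ?a => let ra := reify K a l in constr:(LS c ra)
 | Tbr ?a ?b => let ra := reify K a l in let rb := reify K b l in constr:(LB ra rb)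
 | Tzero ?n => constr:(@LZ K n)
 | _ => let i := inlist t l in constr:(@LA K i)
end.
Ltac lin := lazymatch goal with |- Econg ?br ?act ?L ?R =>
  let Ty := type of L in
  let K := lazymatch Ty with term ?K _ _ => K end in
  let l0 := constr:(@nil Ty) in
  let l1 := collect L l0 in let l := collect R l1 in
  let eL := reify K L l in let eR := reify K R l in
  apply (@lin_thm _ _ _ br act l eL eR L R erefl erefl) end.


Section Main.
Variables (k : fieldType) (g0 g1 : lmodType k)
  (br : g0 -> g0 -> g0) (act : g1 -> g0 -> g1) (d : g1 -> g0).
Local Notation T := (term k g0 g1).
Local Notation E := (Econg br act).
Local Notation D := (dT d).

Lemma tdeg_dT (t : T) : tdeg (D t) = (tdeg t).-1.
Proof.
elim: t => [x|m|n|a IHa b IHb|c a IHa|a IHa b IHb] //=.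
case Ha: (tdeg a) => [|p] /=; first by rewrite IHb Ha.
case Hb: (tdeg b) => [|q] /=; rewrite ?IHa ?IHb ?Ha ?Hb ?addn0 ?addSn //.
Qed.

Lemma wf_dT (t : T) : wf t -> wf (D t).
Proof.
elim: t => [x|m|n|a IHa b IHb|c a IHa|a IHa b IHb] //=.
  case/and3P=> wa wb /eqP dab; by rewrite IHa // IHb // !tdeg_dT dab eqxx.
case/andP=> wa wb.
case: eqP => [ha|ha] /=; first by rewrite wa IHb.
case: eqP => [hb|hb] /=; first by rewrite IHa.
rewrite /= IHa // IHb // wa wb !tdeg_dT /=.
case: (tdeg a) ha => // n _; case: (tdeg b) hb => // m _.
by rewrite /= addnS addSn.
Qed.

Lemma D0 (t : T) : wf t -> tdeg t = 0%N -> E (D t) (Tzero 0).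
Proof.
elim: t => [x|m|n|a IHa b IHb|c a IHa|a IHa b IHb] /=.
- by move=> _ _; exact: Erefl.
- by move=> _ h; discriminate h.
- by move=> _ ->; exact: Erefl.
- case/and3P=> wa wb /eqP dab ha.
  apply: Etr (Ec_add (IHa wa ha) (IHb wb _)) _; first by rewrite -dab.
  exact: (Ec_add0 br act (a:=Tzero 0)).
- move=> wa ha; apply: Etr (Ec_scale c (IHa wa ha)) _; exact: scaleZ.
- case/andP=> wa wb /eqP; rewrite addn_eq0 => /andP[/eqP ha /eqP hb].
  rewrite ha eqxx /=.
  apply: Etr (Ec_br (Erefl br act a) (IHb wb hb)) _.
  by have := BZr br act 0 wa; rewrite ha.
Qed.


Definition sg (b : bool) : k := if b then -1 else 1.
Lemma sgE n : (-1)^+n = sg (odd n).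
Proof. by rewrite /sg -signr_odd; case: odd; rewrite ?expr1 ?expr0. Qed.

Ltac degs := repeat match goal with H : tdeg ?x = _ |- context [tdeg ?x] => rewrite H end.
Ltac wfatom := solve [ assumption | apply: wf_dT; wfatom ].
Ltac side := simpl; rewrite ?tdeg_dT; degs; simpl;
   repeat (apply/andP; split); first [ wfatom | lia | (apply/eqP; lia) | reflexivity | idtac ].
Ltac coefs := simpl; repeat split; rewrite ?tdeg_dT; degs; simpl; rewrite ?sgE; do 3 rewrite ?oddD ?oddM ?oddS ?negbK /=;
   repeat match goal with |- context [odd ?n] => case: (odd n) end; rewrite /sg /=; ring.
Ltac dsimp := simpl; degs; rewrite ?addSn ?addnS ?add0n ?addn0 /=.
Ltac linall := lin; [side|side|side|coefs].

Hypothesis Hd : forall (a : k) m n, d (a *: m + n) = a *: d m + d n.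
Hypothesis Hdact : forall m x, d (act m x) = br (d m) x.

Ltac d0close := apply: Etr; [apply: D0; side | apply: Esym; apply: D0; side].
Ltac rs H l := apply: (rel_sub (l:=l) H); [side|side|side|side|side|idtac].

Lemma d_0 : d 0 = 0.
Proof.
have := Hd 1 0 0; rewrite !scale1r addr0 => /(congr1 (fun x => x - d 0)).
rewrite /= subrr addrK; by move=> ->.
Qed.
Lemma d_add m n : d (m + n) = d m + d n.
Proof. by have := Hd 1 m n; rewrite !scale1r. Qed.
Lemma d_scale c m : d (c *: m) = c *: d m.
Proof. by have := Hd c m 0; rewrite !addr0 d_0 addr0. Qed.

Lemma dT_cong (a b : T) : E a b -> wf a -> E (D a) (D b).
Proof.
elim=> {a b}.
- move=> t _; exact: Erefl.
- move=> a b h IH wb; apply: Esym; apply: IH; exact: Ewf (Esym h) wb.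
- move=> a b c h1 IH1 h2 IH2 wa; exact: Etr (IH1 wa) (IH2 (Ewf h1 wa)).
- move=> a a' b b' _ IH1 _ IH2 /and3P[wa wb _]; exact: Ec_add (IH1 wa) (IH2 wb).
- move=> c a a' _ IH wa /=; apply: Ec_scale; exact: IH.
- move=> a a' b b' h1 IH1 h2 IH2 /andP[wa wb] /=.
  rewrite -(Edeg h1) -(Edeg h2).
  case: (tdeg a == 0%N) => /=; first exact: Ec_br h1 (IH2 wb).
  case: (tdeg b == 0%N) => /=; first exact: Ec_br (IH1 wa) h2.
  exact: Ec_add (Ec_br (IH1 wa) h2) (Ec_scale _ (Ec_br h1 (IH2 wb))).
- move=> a b c wa wb wc dab dbc _ /=; apply: Ec_addA; side.
- move=> a b wa wb dab _ /=; apply: Ec_addC; side.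
- move=> a wa _ /=; rewrite -tdeg_dT; apply: Ec_add0; side.
- move=> a wa _ /=; rewrite -tdeg_dT; apply: Ec_addN; side.
- move=> a wa _ /=; apply: Ec_scale1; side.
- move=> c c' a wa _ /=; apply: Ec_scaleA; side.
- move=> c a b wa wb dab _ /=; apply: Ec_scaleDr; side.
- move=> c c' a wa _ /=; apply: Ec_scaleDl; side.
- move=> x y _ /=; apply: Esym; exact: (Ec_add0 br act (a:=Tzero 0)).
- move=> c x _ /=; apply: Esym; exact: scaleZ.
- move=> m n _ /=; rewrite d_add; exact: Ec_T0add.
- move=> c m _ /=; rewrite d_scale; exact: Ec_T0scale.
- move=> a a' b wa wa' wb daa' _.
  case Ha: (tdeg a) daa' => [|p] Ha'; move/esym in Ha'; case Hb: (tdeg b) => [|q]; dsimp; linall.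
- move=> a b b' wa wb wb' dbb' _.
  case Hb: (tdeg b) dbb' => [|q] Hb'; move/esym in Hb'; case Ha: (tdeg a) => [|p]; dsimp; linall.
- move=> c a b wa wb _.
  case Ha: (tdeg a) => [|p]; case Hb: (tdeg b) => [|q]; dsimp; linall.
- move=> c a b wa wb _.
  case Ha: (tdeg a) => [|p]; case Hb: (tdeg b) => [|q]; dsimp; linall.
- move=> a b wa wb _.
  case Ha: (tdeg a) => [|p]; case Hb: (tdeg b) => [|q].
  + d0close.
  + dsimp; rs (Ec_anti br act wa (wf_dT wb)) (1 : k); linall.
  + dsimp; rs (Ec_anti br act (wf_dT wa) wb) (1 : k); linall.
  + dsimp; rs (Ec_anti br act (wf_dT wa) wb) (1 : k).
    rs (Ec_anti br act wa (wf_dT wb)) ((-1)^+(tdeg a) : k); linall.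
- move=> a b c wa wb wc _.
  have JA := Ec_jacobi br act (wf_dT wa) wb wc.
  have JB := Ec_jacobi br act wa (wf_dT wb) wc.
  have JC := Ec_jacobi br act wa wb (wf_dT wc).
  case Ha: (tdeg a) => [|p]; case Hb: (tdeg b) => [|q]; case Hc: (tdeg c) => [|r].
  + d0close.
  + dsimp; rs JC ((-1)^+(tdeg a) * (-1)^+(tdeg b) : k); linall.
  + dsimp; rs JB ((-1)^+(tdeg a) : k); linall.
  + dsimp; rs JB ((-1)^+(tdeg a) : k); rs JC ((-1)^+(tdeg a) * (-1)^+(tdeg b) : k); linall.
  + dsimp; rs JA (1 : k); linall.
  + dsimp; rs JA (1 : k); rs JC ((-1)^+(tdeg a) * (-1)^+(tdeg b) : k); linall.
  + dsimp; rs JA (1 : k); rs JB ((-1)^+(tdeg a) : k); linall.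
  + dsimp; rs JA (1 : k); rs JB ((-1)^+(tdeg a) : k); rs JC ((-1)^+(tdeg a) * (-1)^+(tdeg b) : k).
    linall.
- move=> x y _ /=; exact: BZr.
- move=> m x _ /=; rewrite Hdact; exact: Ec_rel00.
Qed.


Ltac dsimp2 := simpl; rewrite ?tdeg_dT; degs; rewrite ?addSn ?addnS ?add0n ?addn0 /=.

Lemma dd0 (t : T) : wf t -> E (D (D t)) (Tzero (tdeg t).-2).
Proof.
elim: t => [x|m|n|a IHa b IHb|c a IHa|a IHa b IHb].
- move=> _; exact: Erefl.
- move=> _; exact: Erefl.
- move=> _; exact: Erefl.
- case/and3P=> wa wb /eqP dab /=.
  apply: Etr (Ec_add (IHa wa) (IHb wb)) _; rewrite dab.
  exact: (Ec_add0 br act (a:=Tzero (tdeg b).-2)).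
- move=> wa /=; apply: Etr (Ec_scale c (IHa wa)) _; exact: scaleZ.
- case/andP=> wa wb.
  have IA := Ec_br (IHa wa) (Erefl _ _ b).
  have IB := Ec_br (Erefl _ _ a) (IHb wb).
  case Ha: (tdeg a) => [|[|p]]; case Hb: (tdeg b) => [|[|q]].
  + apply: Etr; [apply: D0; [apply: wf_dT; side | rewrite !tdeg_dT; side] | rewrite /= Ha Hb; exact: Erefl].
  + apply: Etr; [apply: D0; [apply: wf_dT; side | rewrite !tdeg_dT; side] | rewrite /= Ha Hb; exact: Erefl].
  + do 2 dsimp2; rs IB (1 : k); linall.
  + apply: Etr; [apply: D0; [apply: wf_dT; side | rewrite !tdeg_dT; side] | rewrite /= Ha Hb; exact: Erefl].
  + do 2 dsimp2; linall.
  + do 2 dsimp2; rs IB (1 : k); linall.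
  + do 2 dsimp2; rs IA (1 : k); linall.
  + do 2 dsimp2; rs IA (1 : k); linall.
  + do 2 dsimp2; rs IA (1 : k); rs IB (1 : k); linall.
Qed.

End Main.

Lemma zid (V : zmodType) (A B C D F G : V) : (A - B) - (C - D) = ((A - F) - (G - D)) + ((F - C) - (B - G)).
Proof.
rewrite !opprB [RHS]addrACA.
have -> : A - F + (F - C) = A - C by rewrite addrA subrK.
have -> : D - G + (G - B) = D - B by rewrite addrA subrK.
by rewrite addrACA [in RHS]addrACA (addrC (-B)).
Qed.

Section Sem.
Variables (k : fieldType) (g0 g1 : lmodType k)
  (br : g0 -> g0 -> g0) (act : g1 -> g0 -> g1).
Local Notation T := (term k g0 g1).
Local Notation E := (Econg br act).
Hypothesis HbrL : forall (a : k) x y z, br (a *: x + y) z = a *: br x z + br y z.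
Hypothesis HbrR : forall (a : k) x y z, br x (a *: y + z) = a *: br x y + br x z.
Hypothesis Halt : forall x, br x x = 0.
Hypothesis Hjac : forall x y z, br x (br y z) + br y (br z x) + br z (br x y) = 0.
Hypothesis HactL : forall (a : k) m n x, act (a *: m + n) x = a *: act m x + act n x.
Hypothesis HactR : forall (a : k) m x y, act m (a *: x + y) = a *: act m x + act m y.
Hypothesis Hmod : forall m x y, act m (br x y) = act (act m x) y - act (act m y) x.

Lemma zero_of (V : zmodType) (f : V) : f = f + f -> f = 0.
Proof. by move/(congr1 (fun x => x - f)); rewrite subrr addrK. Qed.

Lemma br0l y : br 0 y = 0.
Proof. by apply: zero_of; have := HbrL 1 0 0 y; rewrite scale1r !addr0 scale1r. Qed.
Lemma br0r y : br y 0 = 0.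
Proof. by apply: zero_of; have := HbrR 1 y 0 0; rewrite scale1r !addr0 scale1r. Qed.
Lemma act0l y : act 0 y = 0.
Proof. by apply: zero_of; have := HactL 1 0 0 y; rewrite scale1r !addr0 scale1r. Qed.
Lemma act0r y : act y 0 = 0.
Proof. by apply: zero_of; have := HactR 1 y 0 0; rewrite scale1r !addr0 scale1r. Qed.
Lemma brDl x y z : br (x + y) z = br x z + br y z.
Proof. by have := HbrL 1 x y z; rewrite !scale1r. Qed.
Lemma brDr x y z : br x (y + z) = br x y + br x z.
Proof. by have := HbrR 1 x y z; rewrite !scale1r. Qed.
Lemma brZl c x z : br (c *: x) z = c *: br x z.
Proof. by have := HbrL c x 0 z; rewrite !addr0 br0l addr0. Qed.
Lemma brZr c x z : br x (c *: z) = c *: br x z.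
Proof. by have := HbrR c x z 0; rewrite !addr0 br0r addr0. Qed.
Lemma actDl m n x : act (m + n) x = act m x + act n x.
Proof. by have := HactL 1 m n x; rewrite !scale1r. Qed.
Lemma actDr m x y : act m (x + y) = act m x + act m y.
Proof. by have := HactR 1 m x y; rewrite !scale1r. Qed.
Lemma actZl c m x : act (c *: m) x = c *: act m x.
Proof. by have := HactL c m 0 x; rewrite !addr0 act0l addr0. Qed.
Lemma actZr c m x : act m (c *: x) = c *: act m x.
Proof. by have := HactR c m x 0; rewrite !addr0 act0r addr0. Qed.
Lemma brNl x y : br (- x) y = - br x y.
Proof. by rewrite -scaleN1r brZl scaleN1r. Qed.
Lemma brNr x y : br x (- y) = - br x y.
Proof. by rewrite -scaleN1r brZr scaleN1r. Qed.
Lemma actNl m x : act (- m) x = - act m x.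
Proof. by rewrite -scaleN1r actZl scaleN1r. Qed.
Lemma actBl m n x : act (m - n) x = act m x - act n x.
Proof. by rewrite actDl actNl. Qed.
Lemma brC x y : br x y = - br y x.
Proof.
have := Halt (x + y); rewrite brDl !brDr !Halt add0r addr0 => /eqP.
by rewrite addr_eq0 => /eqP.
Qed.
Lemma jac' a b c : br a (br b c) = br (br a b) c + br b (br a c).
Proof.
rewrite (brC (br a b)) (brC a c) brNr.
have /eqP := Hjac a b c; rewrite -addrA addr_eq0 => /eqP ->.
by rewrite opprD addrC.
Qed.

Fixpoint sem (t : T) : g0 * g1 :=
  match t with
  | T0 x => (x, 0) | T1 m => (0, m) | Tzero _ => (0, 0)
  | Tadd a b => ((sem a).1 + (sem b).1, (sem a).2 + (sem b).2)
  | Tscale c a => (c *: (sem a).1, c *: (sem a).2)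
  | Tbr a b => (br (sem a).1 (sem b).1, act (sem a).2 (sem b).1 - act (sem b).2 (sem a).1)
  end.

Lemma sem_hom (t : T) : wf t ->
  [/\ (tdeg t = 0%N -> (sem t).2 = 0), (0 < tdeg t)%N -> (sem t).1 = 0
    & (1 < tdeg t)%N -> (sem t).2 = 0].
Proof.
elim: t => [x|m|n|a IHa b IHb|c a IHa|a IHa b IHb] /=.
- by [].
- by [].
- by [].
- case/and3P=> wa wb /eqP dab.
  case: (IHa wa) => a1 a2 a3; case: (IHb wb) => b1 b2 b3; rewrite -dab in b1 b2 b3.
  split=> h /=.
  + by rewrite a1 // b1 // addr0.
  + by rewrite a2 // b2 // addr0.
  + by rewrite a3 // b3 // addr0.
- move=> wa; case: (IHa wa) => a1 a2 a3.
  split=> h /=.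
  + by rewrite a1 // scaler0.
  + by rewrite a2 // scaler0.
  + by rewrite a3 // scaler0.
- case/andP=> wa wb.
  case: (IHa wa) => a1 a2 a3; case: (IHb wb) => b1 b2 b3.
  split.
  + move/eqP; rewrite addn_eq0 => /andP[/eqP ha /eqP hb].
    by rewrite a1 // b1 // !act0l subrr.
  + case: (tdeg a) a1 a2 a3 => [|p] a1 a2 a3.
      by rewrite add0n => h; rewrite b2 // br0r.
    by rewrite a2 // br0l.
  + move=> h.
    have t1 : act (sem a).2 (sem b).1 = 0.
      case: (tdeg b) b1 b2 b3 h => [|q] b1 b2 b3 h.
        by rewrite addn0 in h; rewrite a3 // act0l.
      by rewrite b2 // act0r.
    have t2 : act (sem b).2 (sem a).1 = 0.
      case: (tdeg a) a1 a2 a3 h => [|p] a1 a2 a3 h.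
        by rewrite add0n in h; rewrite b3 // act0l.
      by rewrite a2 // act0r.
    by rewrite t1 t2 subrr.
Qed.


Lemma sem_sound (a b : T) : E a b -> sem a = sem b.
Proof.
elim=> {a b}; rewrite /=.
- by [].
- by move=> a b _ ->.
- by move=> a b c _ -> _ ->.
- by move=> a a' b b' _ /= -> _ ->.
- by move=> c a a' _ /= ->.
- by move=> a a' b b' _ /= -> _ ->.
- by move=> a b c *; rewrite !addrA.
- by move=> a b *; rewrite addrC [X in (_, X)]addrC.
- by move=> a *; rewrite !addr0; case: (sem a).
- by move=> a *; rewrite !scaleN1r !subrr.
- by move=> a *; rewrite !scale1r; case: (sem a).
- by move=> c c' a *; rewrite !scalerA.
- by move=> c a b *; rewrite !scalerDr.
- by move=> c c' a *; rewrite !scalerDl.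
- by move=> x y; rewrite addr0.
- by move=> c x; rewrite scaler0.
- by move=> m n; rewrite addr0.
- by move=> c m; rewrite scaler0.
- move=> a a' b *; rewrite brDl actDl actDr opprD.
  by apply: (f_equal2 pair) => //; rewrite addrACA.
- move=> a b b' *; rewrite brDr actDl actDr opprD.
  by apply: (f_equal2 pair) => //; rewrite addrACA.
- by move=> c a b *; rewrite brZl actZl actZr scalerBr.
- by move=> c a b *; rewrite brZr actZl actZr scalerBr.
- move=> a b wa wb.
  case: (sem_hom wa) => a1 a2 a3; case: (sem_hom wb) => b1 b2 b3.
  rewrite -signr_odd oddM.
  case: (boolP (odd (tdeg a))) => oa; case: (boolP (odd (tdeg b))) => ob /=;
    rewrite ?expr0 ?expr1 ?opprK ?scaleN1r ?scale1r.
  + have pa : (0 < tdeg a)%N by case: (tdeg a) oa.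
    have pb : (0 < tdeg b)%N by case: (tdeg b) ob.
    by rewrite a2 // b2 // !br0l !act0r subrr.
  1-3: by apply: (f_equal2 pair); [apply: brC | rewrite opprB].
- move=> a b c wa wb wc.
  case: (sem_hom wa) => a1 a2 a3; case: (sem_hom wb) => b1 b2 b3.
  rewrite -signr_odd oddM.
  case: (boolP (odd (tdeg a))) => oa; case: (boolP (odd (tdeg b))) => ob /=;
    rewrite ?expr0 ?expr1 ?scaleN1r ?scale1r.
  + have pa : (0 < tdeg a)%N by case: (tdeg a) oa.
    have pb : (0 < tdeg b)%N by case: (tdeg b) ob.
    by rewrite a2 // b2 // !(br0l, br0r, act0r, act0l, subrr, oppr0, addr0, scaler0).
  1-3: apply: (f_equal2 pair); [exact: jac' | rewrite !Hmod !actBl; exact: zid].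
- by move=> x y; rewrite !act0l subrr.
- by move=> m x; rewrite br0l act0r subr0.
Qed.

End Sem.


Section Reps.
Variables (k : fieldType) (g0 g1 : lmodType k)
  (br : g0 -> g0 -> g0) (act : g1 -> g0 -> g1).
Local Notation T := (term k g0 g1).
Local Notation E := (Econg br act).

Lemma reps (t : T) : wf t ->
  (tdeg t = 0%N -> exists x, E t (T0 x)) /\ (tdeg t = 1%N -> exists m, E t (T1 m)).
Proof.
elim: t => [x|m|n|a IHa b IHb|c a IHa|a IHa b IHb] /=.
- by move=> _; split=> // _; exists x; apply: Erefl.
- by move=> _; split=> // _; exists m; apply: Erefl.
- move=> _; split=> ->.
  + exists 0; apply: Esym; have := Ec_T0scale br act 0 (0 : g0); rewrite scaler0 => h.
    apply: Etr h _; exact: (scale0 br act (x:=T0 0)).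
  + exists 0; apply: Esym; have := Ec_T1scale br act 0 (0 : g1); rewrite scaler0 => h.
    apply: Etr h _; exact: (scale0 br act (x:=T1 0)).
- case/and3P=> wa wb /eqP dab.
  case: (IHa wa) => a0 a1; case: (IHb wb) => b0 b1; rewrite -dab in b0 b1.
  split=> h.
  + case: (a0 h) => x hx; case: (b0 h) => y hy; exists (x + y).
    apply: Etr (Ec_add hx hy) _; apply: Esym; exact: Ec_T0add.
  + case: (a1 h) => x hx; case: (b1 h) => y hy; exists (x + y).
    apply: Etr (Ec_add hx hy) _; apply: Esym; exact: Ec_T1add.
- move=> wa; case: (IHa wa) => a0 a1; split=> h.
  + case: (a0 h) => x hx; exists (c *: x).
    apply: Etr (Ec_scale c hx) _; apply: Esym; exact: Ec_T0scale.
  + case: (a1 h) => x hx; exists (c *: x).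
    apply: Etr (Ec_scale c hx) _; apply: Esym; exact: Ec_T1scale.
- case/andP=> wa wb.
  case: (IHa wa) => a0 a1; case: (IHb wb) => b0 b1.
  split=> h.
  + move/eqP: h; rewrite addn_eq0 => /andP[/eqP ha /eqP hb].
    case: (a0 ha) => x hx; case: (b0 hb) => y hy; exists (br x y).
    apply: Etr (Ec_br hx hy) _; exact: Ec_rel00.
  + case Ha: (tdeg a) h => [|p] h.
    * rewrite add0n in h; case: (a0 Ha) => x hx; case: (b1 h) => m hm.
      exists ((- (-1) ^+ (tdeg (T0 x : T) * tdeg (T1 m : T))) *: act m x).
      apply: Etr (Ec_br hx hm) _.
      apply: Etr (Ec_anti br act (a:=T0 x) (b:=T1 m) erefl erefl) _.
      apply: Etr (Ec_scale _ (Ec_rel10 br act m x)) _.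
      apply: Esym; exact: Ec_T1scale.
    * have ep : p = 0%N by move: h; rewrite addSn; case; case: (p) => // ?; rewrite addSn.
      subst p; rewrite add1n in h; case: h => hb.
      case: (a1 Ha) => m hm; case: (b0 hb) => x hx; exists (act m x).
      apply: Etr (Ec_br hm hx) _; exact: Ec_rel10.
Qed.

End Reps.

Theorem mainTheorem6 (k : fieldType) (g0 g1 : lmodType k)
  (br : g0 -> g0 -> g0) (act : g1 -> g0 -> g1) (d : g1 -> g0) :
  [pchar k] =i pred0 ->
  LM_lie_algebra br act d ->
  (* E g is a dg Lie algebra: d is well defined on the quotient, d^2 = 0 *)
  (forall a b : term k g0 g1, wf a -> (0 < tdeg a)%N ->
      Econg br act a b -> Econg br act (dT d a) (dT d b)) /\
  (forall a : term k g0 g1, wf a -> (1 < tdeg a)%N ->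
      Econg br act (dT d (dT d a)) (Tzero (tdeg a - 2))) /\
  (* truncation: x |-> [x] : g0 -> (E g)_0 and m |-> [m] : g1 -> (E g)_1 are
     linear bijections compatible with d and the brackets *)
  (forall x y : g0, Econg br act (T0 x) (T0 y) -> x = y) /\
  (forall m n : g1, Econg br act (T1 m) (T1 n) -> m = n) /\
  (forall t : term k g0 g1, wf t -> tdeg t = 0%N ->
      exists x : g0, Econg br act t (T0 x)) /\
  (forall t : term k g0 g1, wf t -> tdeg t = 1%N ->
      exists m : g1, Econg br act t (T1 m)) /\
  (forall (c : k) (x y : g0),
      Econg br act (T0 (c *: x + y)) (Tadd (Tscale c (T0 x)) (T0 y))) /\
  (forall (c : k) (m n : g1),
      Econg br act (T1 (c *: m + n)) (Tadd (Tscale c (T1 m)) (T1 n))) /\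
  (forall m : g1, dT d (T1 m : term k g0 g1) = T0 (d m)) /\
  (forall x y : g0, Econg br act (Tbr (T0 x) (T0 y)) (T0 (br x y))) /\
  (forall (m : g1) (x : g0), Econg br act (Tbr (T1 m) (T0 x)) (T1 (act m x))).
Proof.
move=> _ [HbrL [HbrR [Halt [Hjac [HactL [HactR [Hmod [Hd Hdact]]]]]]]].
split; first by move=> a b wa _ h; exact: (dT_cong Hd Hdact h wa).
split; first by move=> a wa _; rewrite subn2; exact: dd0.
split; first by move=> x y /(sem_sound HbrL HbrR Halt Hjac HactL HactR Hmod) [].
split; first by move=> m n /(sem_sound HbrL HbrR Halt Hjac HactL HactR Hmod) [].
split; first by move=> t wt ht; case: (reps br act wt) => h _; exact: h.
split; first by move=> t wt ht; case: (reps br act wt) => _ h; exact: h.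
split.
  move=> c x y; apply: Etr (Ec_T0add br act _ _) _.
  apply: Ec_add (Erefl _ _ _); exact: Ec_T0scale.
split.
  move=> c m n; apply: Etr (Ec_T1add br act _ _) _.
  apply: Ec_add (Erefl _ _ _); exact: Ec_T1scale.
split; first by [].
split; first by move=> x y; exact: Ec_rel00.
by move=> m x; exact: Ec_rel10.
Qed.
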